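(* Let $\mathsf{K}$ be the variety of type $\langle\wedge,\vee,\neg,J_2,0,1\rangle$ axiomatised by: - $x\vee x\approx x$; - $x\vee y\approx y\vee x$; - $x\vee(y\vee z)\approx(x\vee y)\vee z$; - $\neg\neg x\approx x$; - $x\wedge y\approx\neg(\neg x\vee\neg y)$; - $x\wedge(\neg x\vee y)\approx x\wedge y$; - $0\vee x\approx x$; - $1\approx\neg0$; - $J_2x\vee\neg J_2x\approx1$; - $x\vee J_2y\approx x\vee J_2(x\vee y)$; - $x\wedge J_2x\approx x$; - $J_2(x\wedge\neg x)\approx0$. Then $\mathsf{K}$ satisfies: (1) $x\vee J_2x\approx x$; (2) $x\approx J_2x\vee(x\wedge\neg x)$; (3) $J_2J_2x\approx J_2x$; (4) $x\vee\neg J_2y\approx x\vee\neg J_2(x\vee y)$. *)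

(* Defs.v *)
Record KAlg : Type := {
  carrier :> Type;
  meet : carrier -> carrier -> carrier;
  join : carrier -> carrier -> carrier;
  neg : carrier -> carrier;
  J2 : carrier -> carrier;
  zero : carrier;
  one : carrier;
  ax_join_idem : forall x, join x x = x;
  ax_join_comm : forall x y, join x y = join y x;
  ax_join_assoc : forall x y z, join x (join y z) = join (join x y) z;
  ax_neg_invol : forall x, neg (neg x) = x;
  ax_meet_def : forall x y, meet x y = neg (join (neg x) (neg y));
  ax_meet_negjoin : forall x y, meet x (join (neg x) y) = meet x y;
  ax_zero_join : forall x, join zero x = x;
  ax_one_def : one = neg zero;
  ax_J2_compl : forall x, join (J2 x) (neg (J2 x)) = one;
  ax_J2_join : forall x y, join x (J2 y) = join x (J2 (join x y));
  ax_meet_J2 : forall x, meet x (J2 x) = x;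
  ax_J2_zero : forall x, J2 (meet x (neg x)) = zero
}.

(* Main.v *)
Require Import Defs.

Theorem lemma4p2 (A : KAlg) :
  (forall x : A, join A x (J2 A x) = x) /\
  (forall x : A, x = join A (J2 A x) (meet A x (neg A x))) /\
  (forall x : A, J2 A (J2 A x) = J2 A x) /\
  (forall x y : A, join A x (neg A (J2 A y)) = join A x (neg A (J2 A (join A x y)))).
Proof.
  assert (NJ : forall a b : A, neg A (join A a b) = meet A (neg A a) (neg A b)).
  { intros a b. rewrite ax_meet_def, !ax_neg_invol. reflexivity. }
  assert (NM : forall a b : A, neg A (meet A a b) = join A (neg A a) (neg A b)).
  { intros a b. rewrite ax_meet_def, ax_neg_invol. reflexivity. }
  assert (MC : forall a b : A, meet A a b = meet A b a).
  { intros a b. rewrite !ax_meet_def, ax_join_comm. reflexivity. }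
  assert (MA : forall a b c : A, meet A a (meet A b c) = meet A (meet A a b) c).
  { intros a b c. rewrite !ax_meet_def, !ax_neg_invol, ax_join_assoc. reflexivity. }
  assert (D : forall a b : A, join A a (meet A (neg A a) b) = join A a b).
  { intros a b. pose proof (ax_meet_negjoin A (neg A a) (neg A b)) as H.
    rewrite ax_neg_invol in H. apply (f_equal (neg A)) in H.
    rewrite !NM, !ax_neg_invol, NJ, ax_neg_invol in H. exact H. }
  assert (J0 : forall a : A, join A a (zero A) = a).
  { intros a. rewrite ax_join_comm. apply ax_zero_join. }
  assert (F3 : forall x : A, join A x (meet A x (neg A x)) = x).
  { intros x. rewrite MC, D. apply ax_join_idem. }
  assert (P1 : forall x : A, join A x (J2 A x) = x).
  { intros x. pose proof (ax_J2_join A x (meet A x (neg A x))) as H.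
    rewrite F3, ax_J2_zero, J0 in H. symmetry. exact H. }
  assert (N1 : neg A (one A) = zero A).
  { rewrite ax_one_def, ax_neg_invol. reflexivity. }
  assert (B0 : forall x : A, meet A (J2 A x) (neg A (J2 A x)) = zero A).
  { intros x. rewrite ax_meet_def, ax_neg_invol, ax_join_comm, ax_J2_compl. exact N1. }
  assert (P2 : forall x : A, x = join A (J2 A x) (meet A x (neg A x))).
  { intros x. pose proof (D (J2 A x) x) as H.
    rewrite (ax_join_comm A (J2 A x) x), P1 in H.
    assert (K : meet A (neg A (J2 A x)) x = meet A x (zero A)).
    { rewrite <- (B0 x), MA, ax_meet_J2, MC. reflexivity. }
    rewrite K in H.
    pose proof (ax_meet_negjoin A x (zero A)) as H2. rewrite J0 in H2.
    rewrite H2. symmetry. exact H. }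
  split; [exact P1|]. split; [exact P2|]. split.
  - intros x. pose proof (P2 (J2 A x)) as H. rewrite B0, J0 in H.
    symmetry. exact H.
  - intros x y.
    assert (E : forall B : A, join A x (neg A B) = join A x (neg A (join A x B))).
    { intros B. rewrite NJ, D. reflexivity. }
    rewrite (E (J2 A y)), (E (J2 A (join A x y))), <- ax_J2_join. reflexivity.
Qed.
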